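(* Let $\gamma\in\mathbb Q^n$. There exists $b\in\mathbb L$ such that $\mathcal S_\Sigma(\gamma-b)\subset\mathcal C_\Sigma$, or equivalently $\mathcal S_\Sigma(\gamma)\subset(-b)+\mathcal C_\Sigma$.
   Context: $N\cong\mathbb Z^d$ lattice, $\mathcal A=\{v_1,\dots,v_n\}\subset N$ generating $N$ with a homomorphism $\mathrm h:N\to\mathbb Z$, $\mathrm h(v_j)=1$; $\mathbb L=\{l\in\mathbb Z^n:\sum l_jv_j=0\}$; $\Sigma$ the simplicial fan supported on $\mathbb R_{\ge0}\mathrm{Conv}(\mathcal A)$ from a regular triangulation with vertices in $\mathcal A$, $\Sigma(d)$ its maximal cones. For $\gamma\in\mathbb Q^n$ and $l\in\mathbb L$, $\mathrm{Supp}(l)=\{v_j:l_j+\gamma_j\notin\mathbb Z_{\ge0}\}$, and $\mathcal S_\Sigma(\gamma)$ is the set of $l\in\mathbb L$ such that all elements of $\mathrm{Supp}(l)$ generate rays of a single maximal cone of $\Sigma$. For $\sigma\in\Sigma(d)$, $\mathcal C_\sigma=\{x\in\mathbb L\otimes\mathbb R:x_j\ge0$ whenever $\mathbb R_{\ge0}v_j$ is not a ray of $\sigma\}$ and $\mathcal C_\Sigma=\sum_{\sigma\in\Sigma(d)}\mathcal C_\sigma$ (Minkowski sum). *)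

(* Defs.v *)
From HB Require Import structures.
From mathcomp Require Import all_boot all_order all_algebra.
From mathcomp Require Import reals.
Set Implicit Arguments. Unset Strict Implicit. Unset Printing Implicit Defensive.
Import Order.TTheory GRing.Theory Num.Theory.
Local Open Scope ring_scope.

(* Conventions.
   - N = Z^d is represented by integer row vectors 'rV[int]_d.
   - The configuration A = {v_1,...,v_n} is the integer matrix V : 'M[int]_(n,d)
     whose j-th row is v_j.
   - Vectors of Z^n, Q^n, R^n are row vectors 'rV_n; the relation
     sum_j l_j v_j = 0 reads  l *m V = 0. *)

Section Defs.
Variables (R : realType) (n d : nat) (V : 'M[int]_(n, d)).

Definition VR : 'M[R]_(n, d) := map_mx (fun z : int => z%:~R) V.

Definition generates_lattice : Prop :=
  forall u : 'rV[int]_d, exists l : 'rV[int]_n, l *m V = u.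

Definition has_height_one : Prop :=
  exists w : 'cV[int]_d, forall j : 'I_n, (V *m w) j 0 = 1.

Definition in_L (l : 'rV[int]_n) : Prop := l *m V = 0.

Definition in_LR (x : 'rV[R]_n) : Prop := x *m VR = 0.

(* Regular subdivision induced by a height function omega : a linear
   functional psi (a column vector) is "lower" if psi(v_j) <= omega_j for
   all j; the associated cell (a lower face of the lifted configuration) is
   the set of j with psi(v_j) = omega_j. *)
Definition lower (omega : 'I_n -> R) (psi : 'cV[R]_d) : Prop :=
  forall j : 'I_n, (VR *m psi) j 0 <= omega j.

Definition cell (omega : 'I_n -> R) (psi : 'cV[R]_d) : {set 'I_n} :=
  [set j | (VR *m psi) j 0 == omega j].

Definition lin_indep (S : {set 'I_n}) : Prop :=
  forall c : 'rV[R]_n, (forall j, j \notin S -> c 0 j = 0) ->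
    c *m VR = 0 -> c = 0.

(* omega induces a regular triangulation: every cell is a simplex
   (linear independence of vectors on the hyperplane h = 1 is affine
   independence of the points). *)
Definition regular_triangulation (omega : 'I_n -> R) : Prop :=
  forall psi, lower omega psi -> lin_indep (cell omega psi).

(* Sigma(d): the maximal (full-dimensional) cones of the fan Sigma, given by
   the index sets of their ray generators. *)
Definition max_cone (omega : 'I_n -> R) (sigma : {set 'I_n}) : Prop :=
  #|sigma| = d /\ exists psi, lower omega psi /\ cell omega psi = sigma.

Definition is_ray (sigma : {set 'I_n}) (j : 'I_n) : Prop :=
  exists2 i, i \in sigma & row i V = row j V.

Definition in_Supp (gamma : 'rV[rat]_n) (l : 'rV[int]_n) (j : 'I_n) : Prop :=
  ~ exists k : nat, (l 0 j)%:~R + gamma 0 j = k%:R.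

Definition in_S (omega : 'I_n -> R) (gamma : 'rV[rat]_n) (l : 'rV[int]_n)
  : Prop :=
  in_L l /\ exists sigma, max_cone omega sigma /\
    forall j, in_Supp gamma l j -> is_ray sigma j.

Definition in_C_sigma (sigma : {set 'I_n}) (x : 'rV[R]_n) : Prop :=
  in_LR x /\ forall j, ~ is_ray sigma j -> 0 <= x 0 j.

Definition in_C_Sigma (omega : 'I_n -> R) (x : 'rV[R]_n) : Prop :=
  exists xs : {set 'I_n} -> 'rV[R]_n,
    (forall sigma, max_cone omega sigma -> in_C_sigma sigma (xs sigma)) /\
    (forall sigma, ~ max_cone omega sigma -> xs sigma = 0) /\
    x = \sum_(sigma : {set 'I_n}) xs sigma.

End Defs.

(* Main.v *)
Require Import Defs.
From HB Require Import structures.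
From mathcomp Require Import all_boot all_order all_algebra.
From mathcomp Require Import reals.
From mathcomp Require Import lra zify.
From Stdlib Require Import Classical.
Import Order.TTheory GRing.Theory Num.Theory.
Local Open Scope ring_scope.
Set Implicit Arguments. Unset Strict Implicit. Unset Printing Implicit Defensive.

Section S.
Variables (R : realType) (n d : nat) (V : 'M[int]_(n, d)) (x0 : 'I_n).

Definition sel (s : {set 'I_n}) (i : 'I_d) : 'I_n := nth x0 (enum s) i.
Definition Smx (K : pzRingType) (s : {set 'I_n}) : 'M[K]_(d, n) :=
  \matrix_(i, j) ((sel s i == j)%:R).

Lemma Smx_mul (K : pzRingType) (s : {set 'I_n}) k (M : 'M[K]_(n,k)) : Smx K s *m M = rowsub (sel s) M.
Proof.
apply/matrixP=> i j; rewrite !mxE (bigD1 (sel s i)) //= !mxE eqxx mul1r.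
rewrite big1 ?addr0 // => j' /negbTE; rewrite mxE eq_sym => ->.
by rewrite mul0r.
Qed.

Lemma sel_in (s : {set 'I_n}) (H : #|s| = d) i : sel s i \in s.
Proof. by rewrite /sel -mem_enum mem_nth // -cardE H ltn_ord. Qed.

Lemma sel_inj (s : {set 'I_n}) (H : #|s| = d) : injective (sel s).
Proof.
move=> i j /eqP; rewrite /sel nth_uniq ?enum_uniq // -?cardE ?H ?ltn_ord //.
by move=> /eqP/val_inj.
Qed.

Lemma Smx_out (K : pzRingType) (s : {set 'I_n}) (a : 'rV[K]_d) j (H : #|s| = d) :
  j \notin s -> (a *m Smx K s) 0 j = 0.
Proof.
move=> js; rewrite mxE big1 // => i _; rewrite mxE; case: eqP => [e|].
  by move: js; rewrite -e sel_in.
by rewrite mulr0.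
Qed.

Lemma Smx_sel (K : pzRingType) (s : {set 'I_n}) (H : #|s| = d) (a : 'rV[K]_d) i :
  (a *m Smx K s) 0 (sel s i) = a 0 i.
Proof.
rewrite mxE (bigD1 i) //= mxE eqxx mulr1 big1 ?addr0 // => i' ne.
by rewrite mxE (inj_eq (sel_inj H)) (negbTE ne) mulr0.
Qed.

Lemma unit_sel (s : {set 'I_n}) (H : #|s| = d) :
  lin_indep R V s -> rowsub (sel s) (VR R V) \in unitmx.
Proof.
move=> li; rewrite unitmxE unitfE; apply/negP => /det0P [a a0 aV].
have e : a *m Smx R s = 0.
  apply: li => [j js|]; first exact: Smx_out.
  by rewrite -mulmxA Smx_mul.
apply: (negP a0); apply/eqP/rowP => i.
by rewrite -(Smx_sel H a i) e !mxE.
Qed.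

Definition P s (w : 'rV[R]_n) : 'rV[R]_n :=
  w - ((w *m VR R V) *m invmx (rowsub (sel s) (VR R V))) *m Smx R s.

Lemma P_L (s : {set 'I_n}) (H : #|s| = d) (li : lin_indep R V s) w : P s w *m VR R V = 0.
Proof.
by rewrite /P mulmxBl -!mulmxA Smx_mul mulVmx ?unit_sel // mulmx1 subrr.
Qed.

Lemma P_out (s : {set 'I_n}) (H : #|s| = d) w j : j \notin s -> P s w 0 j = w 0 j.
Proof.
move=> js; rewrite /P.
have := Smx_out ((w *m VR R V) *m invmx (rowsub (sel s) (VR R V))) H js.
set X := (_ *m Smx R s) => hX.
by rewrite mxE [X in _ + X]mxE hX subr0.
Qed.


Lemma mapM_int m k p (A : 'M[int]_(m, k)) (B : 'M[int]_(k, p)) :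
  map_mx (fun z : int => (z%:~R : R)) A *m map_mx (fun z : int => z%:~R) B
  = map_mx (fun z : int => z%:~R) (A *m B).
Proof. by rewrite map_mxM. Qed.

Lemma addE (A B : 'rV[R]_n) j : (A + B) 0 j = A 0 j + B 0 j.
Proof. by rewrite mxE. Qed.

Lemma subE (A B : 'rV[R]_n) j : (A - B) 0 j = A 0 j - B 0 j.
Proof. by rewrite !mxE. Qed.

Lemma Cadd (s : {set 'I_n}) x y :
  in_C_sigma V s x -> in_C_sigma V s y -> in_C_sigma (R:=R) V s (x + y).
Proof.
move=> [xL xp] [yL yp]; split.
  by rewrite /in_LR mulmxDl xL yL addr0.
by move=> j nj; rewrite mxE addr_ge0 ?xp ?yp.
Qed.

Lemma C0 (s : {set 'I_n}) : in_C_sigma (R:=R) V s 0.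
Proof. by split; [rewrite /in_LR mul0mx | move=> j _; rewrite mxE]. Qed.

Lemma le_sum2 (F : {set 'I_n} -> 'I_n -> R) s j :
  (forall s j, 0 <= F s j) -> F s j <= \sum_s \sum_j F s j.
Proof.
move=> F0; rewrite (bigD1 s) //= (bigD1 j) //=.
have h1 : 0 <= \sum_(i | i != j) F s i by apply: sumr_ge0.
have h2 : 0 <= \sum_(t | t != s) \sum_j F t j.
  by apply: sumr_ge0 => t _; apply: sumr_ge0.
lra.
Qed.

Lemma main (omega : 'I_n -> R) :
  regular_triangulation V omega ->
  forall gamma : 'rV[rat]_n,
  exists b : 'rV[int]_n, in_L V b /\
    forall l : 'rV[int]_n,
      in_S V omega (gamma - map_mx (fun z : int => z%:~R) b) l ->
      in_C_Sigma V omega (map_mx (fun z : int => z%:~R) l).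
Proof.
move=> RT gamma.
have maxli s : max_cone V omega s -> lin_indep R V s.
  by case=> _ [psi [lp <-]]; apply: RT.
case: (classic (exists s0, max_cone V omega s0)) => [[s0 m0]|nm]; last first.
  exists 0; split; first by rewrite /in_L mul0mx.
  by move=> l [_ [s [ms _]]]; case: nm; exists s.
have H0 : #|s0| = d by case: m0.
have li0 := maxli s0 m0.
pose gR := map_mx (@ratr R) gamma.
pose B := \sum_(s : {set 'I_n}) \sum_(j : 'I_n) `|P s (- gR) 0 j|.
have B0 : 0 <= B by apply: sumr_ge0 => s _; apply: sumr_ge0.
pose M := Num.Def.archi_bound B.
have BM : B < M%:R by apply: archi_boundP.
pose VZ := rowsub (sel s0) V.
pose D := \det VZ.
have D0 : D != 0.
  have e : map_mx (fun z : int => (z%:~R : R)) VZ = rowsub (sel s0) (VR R V).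
    by apply/matrixP => i j; rewrite !mxE.
  have := unit_sel H0 li0; rewrite -e unitmxE unitfE.
  by rewrite (det_map_mx (intr : int -> R)) intr_eq0.
pose u : 'rV[int]_n := \row_j ((j \notin s0)%:R).
pose b' := D *: u - ((u *m V) *m \adj VZ) *m Smx int s0.
have b'L : b' *m V = 0.
  rewrite /b' mulmxBl -!mulmxA Smx_mul -/VZ mul_adj_mx mul_mx_scalar.
  by rewrite -scalemxAr scalemxAl subrr.
pose b := (M%:Z * D) *: b'.
have bL : b *m V = 0 by rewrite /b -scalemxAl b'L scaler0.
have bj j : j \notin s0 -> b 0 j = M%:Z * D * D.
  move=> js; rewrite /b mxE /b' mxE [X in _ + X]mxE Smx_out // subr0.
  by rewrite mxE mxE js mulr1.
exists b; split => // l [lL [s [ms supp]]].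
have H : #|s| = d by case: ms.
have li := maxli s ms.
pose lR := map_mx (fun z : int => (z%:~R : R)) l.
pose bR := map_mx (fun z : int => (z%:~R : R)) b.
pose y := P s (- gR) + bR.
pose z := lR - y.
have lRL : lR *m VR R V = 0 by rewrite /lR /VR mapM_int lL map_mx0.
have bRL : bR *m VR R V = 0 by rewrite /bR /VR mapM_int bL map_mx0.
have yL : y *m VR R V = 0 by rewrite /y mulmxDl P_L // bRL addr0.
have yC : in_C_sigma V s0 y.
  split => // j nj.
  have js : j \notin s0 by apply/negP => js; apply: nj; exists j.
  rewrite /y addE [bR 0 j]mxE bj //.
  have hB : `|P s (- gR) 0 j| <= B.
    exact: (@le_sum2 (fun s j => `|P s (- gR) 0 j|) s j (fun _ _ => normr_ge0 _)).
  have hD : 1 <= D * D.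
    have : D != 0 := D0. clear. lia.
  rewrite -mulrA intrM (_ : (M%:Z)%:~R = M%:R :> R) //.
  have hD' : 1 <= (D * D)%:~R :> R by rewrite ler1z.
  move: hB; rewrite ler_norml => /andP [hB _].
  have hM : 0 <= M%:R :> R by [].
  nra.
have zC : in_C_sigma V s z.
  split; first by rewrite /in_LR /z mulmxBl lRL yL subrr.
  move=> j nj.
  have js : j \notin s by apply/negP => js; apply: nj; exists j.
  have : ~ in_Supp (gamma - map_mx (fun z : int => z%:~R) b) l j.
    by move=> /supp.
  move=> /NNPP [k hk].
  have := congr1 (@ratr R) hk.
  rewrite rmorphD rmorph_int mxE rmorphD mxE rmorphN mxE rmorph_int rmorph_nat => hk2.
  rewrite /z /y subE addE P_out // [lR 0 j]mxE [bR 0 j]mxE [(- gR) 0 j]mxE [gR 0 j]mxE.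
  have hk0 : 0 <= k%:R :> R by [].
  lra.
have lRe : lR = y + z by rewrite /z addrC subrK.
exists (fun t => if t == s0 then (if s == s0 then lR else y)
                 else if t == s then z else 0).
split; [|split].
- move=> t mt; case: eqP => [->|ne].
    case: eqP => [e|_]; last exact: yC.
    by rewrite lRe; apply: Cadd => //; rewrite -e.
  case: eqP => [->|_]; [exact: zC | exact: C0].
- move=> t nt; case: eqP => [e|_]; first by case: nt; rewrite e.
  by case: eqP => [e|_]; first by case: nt; rewrite e.
- case: (eqVneq s s0) => [e|ne].
    rewrite (bigD1 s0) //= eqxx e big1 ?addr0 // => t /negbTE ->.
    by [].
  rewrite (bigD1 s0) //= eqxx (bigD1 s) //= eqxx (negbTE ne).
  rewrite big1 ?addr0 ?lRe // => t /andP [/negbTE -> /negbTE ->] //.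
Qed.

End S.

Theorem lemma2p6 (R : realType) (n d : nat) (V : 'M[int]_(n, d))
    (omega : 'I_n -> R) :
  generates_lattice V -> has_height_one V ->
  regular_triangulation V omega ->
  forall gamma : 'rV[rat]_n,
  exists b : 'rV[int]_n, in_L V b /\
    forall l : 'rV[int]_n,
      in_S V omega (gamma - map_mx (fun z : int => z%:~R) b) l ->
      in_C_Sigma V omega (map_mx (fun z : int => z%:~R) l).
Proof.
move=> _ _; case: n V omega => [|n'] V omega RT gamma; last first.
  exact: (main ord0 RT).
exists 0; split; first by rewrite /in_L mul0mx.
move=> l _; exists (fun _ => 0); split; [|split] => //.
  by move=> s _; apply: C0.
  by apply/rowP => -[].
Qed.
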